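(* In a system of quads, the facial walk of a quad cannot contain the same edge twice, whether with the same or with opposite orientations.
   Context: A system of quads is a combinatorial surface (graph cellularly embedded via a rotation system in an orientable surface of negative Euler characteristic) whose graph is bipartite, whose non-perforated faces (quads) are all quadrilaterals, and whose vertices all have degree at least 8. *)

(* Defs.v *)
From mathcomp Require Import all_boot perm.
Set Implicit Arguments. Unset Strict Implicit. Unset Printing Implicit Defensive.

(* Combinatorial surface encoded by darts (oriented edges) of a finite type D:
   - [rev] : fixed-point-free involution, reversing a dart (edges = orbits of rev);
   - [rot] : rotation system, rot d = next dart around the tail vertex of d
             (vertices = orbits of rot);
   - faces = orbits of the face permutation  fperm = rot \o rev
             (follow d to its head, then turn around that vertex);
   - [perf] : the set of darts lying on perforated faces (a union of faces). *)

Section CombSurface.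
Variable D : finType.
Variables (rot rev : {perm D}) (perf : pred D).

Definition fperm (d : D) : D := rot (rev d).

Definition adj_rel : rel D := fun x y => (y == rot x) || (y == rev x).

(* Euler characteristic of the surface: V - E + F, with F the number of
   non-perforated faces (perforated faces are removed open discs).
   "euler_char_neg" says V - E + F < 0, written over nat as V + F < E. *)
Definition nV := fcard rot D.
Definition nE := fcard rev D.
Definition nF := fcard fperm (predC perf).
Definition euler_char_neg : bool := nV + nF < nE.

Definition comb_surface : Prop :=
  [/\ (forall d, rev (rev d) = d),
      (forall d, rev d != d),
      (forall d, perf (fperm d) = perf d),
      (forall d d', connect adj_rel d d') &
      euler_char_neg].

Definition bipartite : Prop :=
  exists col : D -> bool,
    (forall d, col (rot d) = col d) /\ (forall d, col (rev d) != col d).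

Definition system_of_quads : Prop :=
  [/\ comb_surface,
      bipartite,
      (forall d, ~~ perf d -> order fperm d = 4) &
      (forall d, 8 <= order rot d)].

End CombSurface.

(* Main.v *)
Require Import Defs.
From mathcomp Require Import all_boot perm.

Lemma orbit_iter_neq (T : finType) (f : T -> T) (x : T) (i j : nat) :
  i < order f x -> j < order f x -> i != j -> iter i f x != iter j f x.
Proof.
move=> hi hj hij.
have hs : size (orbit f x) = order f x by rewrite /orbit size_traject.
rewrite -(nth_traject f hi) -(nth_traject f hj).
by rewrite (nth_uniq x _ _ (orbit_uniq f x)) ?hs.
Qed.

Theorem lemma30 (D : finType) (rot rev : {perm D}) (perf : pred D) :
  system_of_quads rot rev perf ->
  forall d : D, ~~ perf d ->
  forall i j : 'I_4, i != j ->
    iter i (fperm rot rev) d != iter j (fperm rot rev) d /\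
    iter i (fperm rot rev) d != rev (iter j (fperm rot rev) d).
Proof.
case=> [[revK _ _ _ _] [col [colrot colrev]] hq hrot] d pd i j hij.
set f := fperm rot rev.
have ho : order f d = 4 by exact: hq.
have rotn : forall e, rot e != e.
  move=> e; have h8 := hrot e.
  have := @orbit_iter_neq _ rot e 1 0.
  rewrite /= => H; apply: H => //; exact: leq_trans h8.
have colf1 : forall e, col (f e) = ~~ col e.
  move=> e; rewrite /f /fperm colrot.
  by have := colrev e; case: (col (rev e)); case: (col e).
have colf : forall n e, col (iter n f e) = col e (+) odd n.
  elim=> [|n IH] e /=; first by rewrite addbF.
  by rewrite colf1 IH; case: (col e); case: (odd n).
have finj : injective f by move=> a b; rewrite /f /fperm => /perm_inj /perm_inj.
have f4 : iter 4 f d = d by rewrite -{1}ho iter_order.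
split; first by apply: orbit_iter_neq; rewrite ?ho.
have hA : forall y, f y != rev y.
  by move=> y; rewrite /f /fperm; apply: rotn.
have hB : forall y, y != rev (f y).
  move=> y; apply/eqP => Ey; move/eqP: (hA y); apply; by rewrite {2}Ey revK.
have h3 : forall e, iter 4 f e = e -> f (f (f e)) = rev e -> False.
  move=> e h4 h; have : f (f (f (f e))) = e by exact: h4.
  rewrite h /f /fperm revK => /eqP; by rewrite (negbTE (rotn _)).
apply/eqP => E.
have hc := colrev (iter j f d).
rewrite -E !colf in hc.
case: i j hij E hc => [[|[|[|[|i]]]] hi] // [[|[|[|[|j]]]] hj] //= _ E hc; try by move: hc; case: (col d).
all: first [ by move/eqP: E; rewrite (negbTE (hB _))
           | by move/eqP: E; rewrite (negbTE (hA _))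
           | by apply: (h3 d)
           | (have E3 : f (f (f d)) = rev d by rewrite {2}E revK); by apply: (h3 d) ].
Qed.
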